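(* Let $\Bbbk$ be a field and let $B$ be a filtered bialgebra over $\Bbbk$ (filtration $B_0\subset B_1\subset\cdots$, $\bigcup_nB_n=B$). Suppose chosen subspaces $B(0):=B_0$ and, for $i\ge0$, $B(i+1)\subset\operatorname{Ker}\epsilon$ with $B_{i+1}=B_i\oplus B(i+1)$, and suppose $C\subset B$ is a basis of $B$ such that: $1\in C$; $xy\in C$ for all $x,y\in C$; every element of $C$ lies in some $B(n)$; for every $x\in C$, $\Delta(x)$ is a sum of terms $a\otimes b$ with $a,b\in C$; and for every $x\in C\cap B(n)$ the projections $\Delta_{0,n}(x)$ and $\Delta_{n,0}(x)$ of $\Delta(x)$ onto $B(0)\otimes B(n)$ and $B(n)\otimes B(0)$ are of the form $\Delta_{0,n}(x)=\operatorname{in}(x)\otimes x$ and $\Delta_{n,0}(x)=x\otimes\operatorname{out}(x)$ with $\operatorname{in}(x),\operatorname{out}(x)\in C$ group-like. Let $C_0:=C\cap B_0$. Then for all $x,y\in C$, if $xy\in C_0$ then $x\in C_0$ and $y\in C_0$.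
   Context: A filtered bialgebra is a bialgebra $(B,m,1,\Delta,\epsilon)$ with an increasing sequence of subspaces $B_0\subset B_1\subset\cdots$, $\bigcup_n B_n=B$, such that $1\in B_0$, $B_iB_j\subset B_{i+j}$ and $\Delta(B_n)\subset\sum_{i+j=n}B_i\otimes B_j$. An element $x\ne0$ is group-like if $\Delta(x)=x\otimes x$. *)

(* Defs.v *)
From HB Require Import structures.
From mathcomp Require Import all_boot all_order all_algebra.
Set Implicit Arguments. Unset Strict Implicit. Unset Printing Implicit Defensive.
Import GRing.Theory.
Local Open Scope ring_scope.

Section BialgDefs.
Variables (K : fieldType) (B : algType K).

Definition subspace (S : B -> Prop) :=
  S 0 /\ forall (k : K) u v, S u -> S v -> S (k *: u + v).

(* Elements of B (x) B are represented by finite formal sums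
   sum_i a_i (x) b_i, i.e. by lists of pairs.  Two such lists represent the
   same tensor iff every bilinear form B x B -> K takes the same value on
   them (over a field, bilinear forms separate the points of B (x) B). *)
Definition bilin (phi : B -> B -> K) :=
  (forall b (k : K) u v, phi (k *: u + v) b = k * phi u b + phi v b) /\
  (forall a (k : K) u v, phi a (k *: u + v) = k * phi a u + phi a v).

Definition teq (s t : seq (B * B)) :=
  forall phi, bilin phi ->
    \sum_(p <- s) phi p.1 p.2 = \sum_(p <- t) phi p.1 p.2.

Definition trilin (phi : B -> B -> B -> K) :=
  [/\ (forall b c (k : K) u v, phi (k *: u + v) b c = k * phi u b c + phi v b c),
      (forall a c (k : K) u v, phi a (k *: u + v) c = k * phi a u c + phi a v c) &
      (forall a b (k : K) u v, phi a b (k *: u + v) = k * phi a b u + phi a b v)].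

Definition teq3 (s t : seq (B * B * B)) :=
  forall phi, trilin phi ->
    \sum_(p <- s) phi p.1.1 p.1.2 p.2 = \sum_(p <- t) phi p.1.1 p.1.2 p.2.

Definition tscale (k : K) (s : seq (B * B)) := [seq (k *: p.1, p.2) | p <- s].
Definition tmul (s t : seq (B * B)) :=
  [seq (p.1 * q.1, p.2 * q.2) | p <- s, q <- t].

Variables (Delta : B -> seq (B * B)) (eps : B -> K).

Definition Delta_l (s : seq (B * B)) : seq (B * B * B) :=
  flatten [seq [seq (q.1, q.2, p.2) | q <- Delta p.1] | p <- s].
Definition Delta_r (s : seq (B * B)) : seq (B * B * B) :=
  flatten [seq [seq (p.1, q.1, q.2) | q <- Delta p.2] | p <- s].

Definition is_bialgebra :=
  (forall (k : K) u v, eps (k *: u + v) = k * eps u + eps v) /\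
  eps 1 = 1 /\
  (forall x y, eps (x * y) = eps x * eps y) /\
  (forall (k : K) u v, teq (Delta (k *: u + v)) (tscale k (Delta u) ++ Delta v)) /\
  teq (Delta 1) [:: (1, 1)] /\
  (forall x y, teq (Delta (x * y)) (tmul (Delta x) (Delta y))) /\
  (forall x, teq3 (Delta_l (Delta x)) (Delta_r (Delta x))) /\
  (forall x, \sum_(p <- Delta x) eps p.1 *: p.2 = x) /\
  (forall x, \sum_(p <- Delta x) eps p.2 *: p.1 = x).

Definition grouplike (x : B) := x != 0 /\ teq (Delta x) [:: (x, x)].

Definition is_filtration (Bf : nat -> B -> Prop) :=
  (forall n, subspace (Bf n)) /\
  (forall n b, Bf n b -> Bf n.+1 b) /\
  (forall b, exists n, Bf n b) /\
  Bf 0%N 1 /\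
  (forall i j a b, Bf i a -> Bf j b -> Bf (i + j)%N (a * b)) /\
  (forall n x, Bf n x -> exists s, teq (Delta x) s /\
     forall p, p \in s -> exists i j, (i + j = n)%N /\ Bf i p.1 /\ Bf j p.2).

Definition is_complements (Bf Bc : nat -> B -> Prop) :=
  (forall n, subspace (Bc n)) /\
  (forall b, Bc 0%N b <-> Bf 0%N b) /\
  (forall i b, Bc i.+1 b -> eps b = 0) /\
  (forall i b, Bf i.+1 b <-> exists u v, Bf i u /\ Bc i.+1 v /\ b = u + v) /\
  (forall i b, Bf i b -> Bc i.+1 b -> b = 0).

Definition is_basis (C : B -> Prop) :=
  (forall b, exists s : seq (K * B),
     (forall p, p \in s -> C p.2) /\ b = \sum_(p <- s) p.1 *: p.2) /\
  (forall (s : seq B) (c : B -> K), uniq s -> (forall x, x \in s -> C x) ->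
     \sum_(x <- s) c x *: x = 0 -> forall x, x \in s -> c x = 0).

(* tcomp Bc i j t u : the component of the tensor t in B(i) (x) B(j), with
   respect to B (x) B = (+)_{k,l} B(k) (x) B(l), equals the tensor u. *)
Definition tcomp (Bc : nat -> B -> Prop) (i j : nat) (t u : seq (B * B)) :=
  (forall p, p \in u -> Bc i p.1 /\ Bc j p.2) /\
  exists s, teq t (u ++ s) /\
    forall p, p \in s -> exists k l, (k, l) <> (i, j) /\ Bc k p.1 /\ Bc l p.2.

End BialgDefs.

(* Main.v *)
Require Import Defs.
From HB Require Import structures.
From mathcomp Require Import all_boot all_order all_algebra.
From Stdlib Require Import ClassicalEpsilon.
Import GRing.Theory.
Local Open Scope ring_scope.

Lemma sub_add (K : fieldType) (B : algType K) (S : B -> Prop) u v :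
  subspace S -> S u -> S v -> S (u + v).
Proof. by move=> [_ H] Su Sv; have := H 1 u v Su Sv; rewrite scale1r. Qed.

Lemma sub_scale (K : fieldType) (B : algType K) (S : B -> Prop) k u :
  subspace S -> S u -> S (k *: u).
Proof. by move=> [H0 H] Su; have := H k u 0 Su H0; rewrite addr0. Qed.

Lemma sub_sum (K : fieldType) (B : algType K) (S : B -> Prop) (I : eqType)
  (r : seq I) (P : pred I) (F : I -> B) :
  subspace S -> (forall i, i \in r -> P i -> S (F i)) ->
  S (\sum_(i <- r | P i) F i).
Proof.
move=> HS H; rewrite big_seq_cond; apply: (big_ind S).
- exact: HS.1.
- by move=> u v; apply: sub_add.
- by move=> i /andP[Hi Pi]; apply: H.
Qed.

Definition coordS (K : fieldType) (B : algType K) (x0 : B) (s : seq (K * B)) : K :=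
  \sum_(p <- s) (if p.2 == x0 then p.1 else 0).
Arguments coordS {K B}.

Lemma indep_coord (K : fieldType) (B : algType K) (C : B -> Prop) (s : seq (K * B)) (x0 : B) :
  is_basis C -> (forall p, p \in s -> C p.2) ->
  \sum_(p <- s) p.1 *: p.2 = 0 -> coordS x0 s = 0.
Proof.
move=> HC Hs H0; set L := undup [seq p.2 | p <- s].
have memL : forall p, p \in s -> p.2 \in L.
  by move=> p Hp; rewrite mem_undup; apply: map_f.
case: (boolP (x0 \in L)) => Hx0; last first.
  rewrite /coordS big1_seq // => p /andP[_ Hp]; case: eqP => // E.
  by move/negP: Hx0; case; rewrite -E; apply: memL.
apply: (HC.2 L (fun x => coordS x s)) => //.
- exact: undup_uniq.
- by move=> x; rewrite mem_undup => /mapP[p Hp ->]; apply: Hs.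
rewrite -[RHS]H0. 
under eq_bigr do rewrite /coordS scaler_suml.
rewrite exchange_big /=; apply: eq_big_seq => p Hp.
rewrite (bigD1_seq p.2) ?undup_uniq ?memL //= eqxx big1 ?addr0 // => x Hx.
by case: eqP => [E|_]; [rewrite E eqxx in Hx | rewrite scale0r].
Qed.

Lemma coordS_eq (K : fieldType) (B : algType K) (C : B -> Prop) (s t : seq (K * B)) (x0 : B) :
  is_basis C -> (forall p, p \in s -> C p.2) -> (forall p, p \in t -> C p.2) ->
  \sum_(p <- s) p.1 *: p.2 = \sum_(p <- t) p.1 *: p.2 ->
  coordS x0 s = coordS x0 t.
Proof.
move=> HC Hs Ht E.
have := @indep_coord K B C (s ++ [seq (- p.1, p.2) | p <- t]) x0 HC.
rewrite /coordS !big_cat !big_map /= => H; apply/eqP; rewrite -subr_eq0.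
have -> : - (\sum_(p <- t) (if p.2 == x0 then p.1 else 0)) =
   \sum_(p <- t) (if p.2 == x0 then - p.1 else 0).
  by rewrite -sumrN; apply: eq_bigr => p _; case: ifP; rewrite ?oppr0.
apply/eqP; apply: H.
- move=> p; rewrite mem_cat => /orP[Hp|/mapP[q Hq ->]]; [exact: Hs | exact: (Ht q Hq)].
- rewrite E; under [X in _ + X]eq_bigr do rewrite scaleNr.
  by rewrite sumrN subrr.
Qed.

Theorem lemma4p2 (K : fieldType) (B : algType K)
  (Delta : B -> seq (B * B)) (eps : B -> K)
  (Bf Bc : nat -> B -> Prop) (C : B -> Prop) :
  is_bialgebra Delta eps ->
  is_filtration Delta Bf ->
  is_complements eps Bf Bc ->
  is_basis C ->
  C 1 ->
  (forall x y, C x -> C y -> C (x * y)) ->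
  (forall x, C x -> exists n, Bc n x) ->
  (forall x, C x -> exists s, teq (Delta x) s /\
      forall p, p \in s -> C p.1 /\ C p.2) ->
  (forall n x, C x -> Bc n x ->
     (exists g, C g /\ grouplike Delta g /\ tcomp Bc 0%N n (Delta x) [:: (g, x)]) /\
     (exists g, C g /\ grouplike Delta g /\ tcomp Bc n 0%N (Delta x) [:: (x, g)])) ->
  forall x y, C x -> C y -> (C (x * y) /\ Bf 0%N (x * y)) ->
    (C x /\ Bf 0%N x) /\ (C y /\ Bf 0%N y).
Proof.
move=> [epsL [eps1 [epsM [DL [D1 [DM [coass [cou1 cou2]]]]]]]]
  [Fsub [Fmono [Fall [F1 [Fmul Fdelta]]]]] [Csub [C0F [Ceps [CF Cint]]]]
  HB HC1 HCmul HCc HCD HCtc x y Cx Cy [Cxy Fxy].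
have [rep Hrep] : exists rep : B -> seq (K * B), forall b,
    (forall p, p \in rep b -> C p.2) /\ b = \sum_(p <- rep b) p.1 *: p.2.
  exists (fun b => proj1_sig (constructive_indefinite_description _ (HB.1 b))).
  by move=> b; exact: (proj2_sig (constructive_indefinite_description _ (HB.1 b))).
pose coord (x0 b : B) := coordS x0 (rep b).
have coordL : forall x0 k u v, coord x0 (k *: u + v) = k * coord x0 u + coord x0 v.
  move=> x0 k u v; rewrite /coord.
  rewrite (@coordS_eq K B C _ ([seq (k * p.1, p.2) | p <- rep u] ++ rep v)) //.
  - rewrite /coordS big_cat big_map /= mulr_sumr; congr (_ + _).
    by apply: eq_bigr => p _; case: ifP; rewrite ?mulr0.
  - exact: (Hrep _).1.
  - move=> p; rewrite mem_cat => /orP[/mapP[q Hq ->]|Hp].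
    + exact: ((Hrep u).1 q Hq).
    + exact: ((Hrep v).1 p Hp).
  - rewrite -(Hrep _).2 big_cat big_map /= {1}(Hrep u).2 {1}(Hrep v).2 scaler_sumr.
    by congr (_ + _); apply: eq_bigr => p _; rewrite scalerA.
have coordC : forall x0 c, C c -> coord x0 c = if c == x0 then 1 else 0.
  move=> x0 c Cc; rewrite /coord (@coordS_eq K B C _ [:: (1, c)]) //.
  - by rewrite /coordS big_seq1.
  - exact: (Hrep _).1.
  - by move=> p; rewrite mem_seq1 => /eqP ->.
  - by rewrite -(Hrep _).2 big_seq1 scale1r.
have coord0 : forall x0, coord x0 0 = 0.
  move=> x0; have := coordL x0 1 0 0; rewrite scaler0 addr0 mul1r.
  by move/(congr1 (fun t => t - coord x0 0)); rewrite subrr addrK.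
have coordS' : forall (T : Type) (l : seq T) (f : T -> K) (g : T -> B) x0,
    coord x0 (\sum_(p <- l) f p *: g p) = \sum_(p <- l) f p * coord x0 (g p).
  move=> T l f g x0; elim: l => [|a l IH]; first by rewrite !big_nil coord0.
  by rewrite !big_cons coordL IH.
have BcF : forall i v, Bc i.+1 v -> Bf i.+1 v.
  move=> i v Hv; apply/CF; exists 0, v; split; first exact: (Fsub i).1.
  by split => //; rewrite add0r.
have Fmono' : forall i j b, (i <= j)%N -> Bf i b -> Bf j b.
  move=> i j b; elim: j => [|j IH]; first by rewrite leqn0 => /eqP ->.
  rewrite leq_eqVlt => /orP[/eqP -> //|Hij] Hb; apply: Fmono; exact: IH.
have Wzero : forall n (s : seq (nat * B)),
    (forall p, p \in s -> (p.1 < n)%N /\ Bc p.1.+1 p.2) ->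
    Bf 0%N (\sum_(p <- s) p.2) -> \sum_(p <- s) p.2 = 0.
  elim=> [|n IH] s Hs Hu.
    by case: s Hs {Hu} => [|p s] Hs; [rewrite big_nil | case: (Hs p (mem_head _ _))].
  rewrite (bigID (fun p => p.1 == n)) /= in Hu *.
  set t := \sum_(p <- s | p.1 == n) p.2 in Hu *; set r := \sum_(p <- s | p.1 != n) p.2 in Hu *.
  have Ht : Bc n.+1 t.
    apply: sub_sum => // p Hp /eqP E; rewrite -E; exact: (Hs p Hp).2.
  have Hr : Bf n r.
    apply: sub_sum => // p Hp Hn; have [Hlt Hb] := Hs p Hp.
    apply: (Fmono' p.1.+1) ; last exact: BcF.
    by rewrite ltn_neqAle Hn /= -ltnS.
  have Ht0 : t = 0.
    apply: (Cint n t) => //.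
    have -> : t = (-1) *: r + (t + r) by rewrite scaleN1r addrCA addNr addr0.
    apply: (Fsub n).2 => //; exact: (Fmono' 0%N).
  move: Hu; rewrite Ht0 !add0r /r -big_filter => Hu; apply: IH => // p.
  rewrite mem_filter => /andP[Hn Hp]; have [Hlt Hb] := Hs p Hp; split => //.
  by rewrite ltn_neqAle Hn /= -ltnS.
have Wzero' : forall (s : seq (nat * B)),
    (forall p, p \in s -> Bc p.1.+1 p.2) ->
    Bf 0%N (\sum_(p <- s) p.2) -> \sum_(p <- s) p.2 = 0.
  move=> s Hs; apply: (Wzero (\max_(p <- s) p.1).+1) => p Hp; split; last exact: Hs.
  by rewrite ltnS; apply: (@leq_bigmax_seq _ s predT (fun p : nat * B => p.1) p Hp).
pose idx (b : B) := ClassicalEpsilon.epsilon (inhabits 0%N) (fun j => Bc j.+1 b).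
have Hidx : forall b, C b -> ~ Bf 0%N b -> Bc (idx b).+1 b.
  move=> b Cb Nb; apply: (ClassicalEpsilon.epsilon_spec (inhabits 0%N) (fun j => Bc j.+1 b)).
  have [[|n] Hn] := HCc b Cb; last by exists n.
  by exfalso; apply: Nb; apply/C0F.
pose P (b : B) : bool := if excluded_middle_informative (Bf 0%N b) then true else false.
have PP : forall b, P b <-> Bf 0%N b.
  by move=> b; rewrite /P; case: excluded_middle_informative.
have Bkill : forall c l v, C c -> Bf 0%N c -> Bc l.+1 v -> coord c v = 0.
  move=> c l v Cc Fc Hv; have [HsC Hvs] := Hrep v.
  set s := rep v in HsC Hvs.
  set u0 := \sum_(p <- s | P p.2) p.1 *: p.2.
  set w := \sum_(p <- s | ~~ P p.2) p.1 *: p.2.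
  have Evw : v = u0 + w by rewrite Hvs (bigID (fun p => P p.2)).
  have Fu0 : Bf 0%N u0.
    apply: sub_sum => // p Hp /PP HP; exact: sub_scale.
  have Hu0 : u0 = 0.
    have E : u0 = \sum_(p <- (l, v) :: [seq (idx p.2, - (p.1 *: p.2)) | p <- s & ~~ P p.2]) p.2.
      rewrite big_cons big_map big_filter /= sumrN -/w Evw.
      by rewrite addrK.
    rewrite E; apply: Wzero'; last by rewrite -E.
    move=> p; rewrite inE => /orP[/eqP -> //|/mapP[q]].
    rewrite mem_filter => /andP[Nq Hq] -> /=.
    rewrite -scaleNr; apply: (@sub_scale K B (Bc (idx q.2).+1)); first exact: Csub.
    apply: Hidx; first exact: HsC.
    by move=> /PP; apply/negP.
  rewrite Evw -[u0]scale1r coordL Hu0 coord0 mulr0 add0r /w -big_filter coordS'.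
  rewrite big1_seq // => p /andP[_]; rewrite mem_filter => /andP[Np Hp].
  rewrite coordC; last exact: HsC.
  case: eqP => [E|_]; last by rewrite mulr0.
  by exfalso; move/negP: Np; apply; apply/PP; rewrite E.
have Bz : Bc 0%N (x * y) by apply/C0F.
have [_ [g [_ [_ [_ [s [Hteq Hs]]]]]]] := HCtc 0%N (x * y) Cxy Bz.
pose phi (a b : B) := eps a * coord (x * y) b.
have Hbil : bilin phi.
  split=> [b k u v|a k u v]; rewrite /phi ?epsL ?coordL; by rewrite ?mulrDl ?mulrDr ?mulrA // [eps a * k]mulrC.
have := Hteq phi Hbil.
rewrite /phi -coordS' cou1 coordC // eqxx big_cat big_seq1 /= big1_seq; last first.
  move=> p /andP[_ /Hs [k [l [Hkl [Hk Hl]]]]].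
  case: k Hkl Hk => [|k] Hkl Hk; last by rewrite (Ceps k _ Hk) mul0r.
  case: l Hkl Hl => [//|l] _ Hl.
  by rewrite (Bkill (x * y) l p.2 Cxy Fxy Hl) mulr0.
rewrite addr0 => Hone.
have epsz : eps (x * y) != 0.
  apply/eqP => E; move: Hone; rewrite E mul0r; apply/eqP; exact: oner_neq0.
have key : forall b, C b -> eps b != 0 -> Bf 0%N b.
  move=> b Cb Eb; have [[|n] Hn] := HCc b Cb; first by apply/C0F.
  by rewrite (Ceps n b Hn) eqxx in Eb.
rewrite epsM mulf_eq0 negb_or in epsz; case/andP: epsz => ex ey.
by split; split => //; apply: key.
Qed.
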